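(* Let $d\in\mathbb N$, let $\emptyset\neq\Theta\subset\mathbb R^d$ be an orientable $C^1$-hypersurface of positive reach, let $\mu\colon\mathbb R^d\to\mathbb R^d$ be intrinsic Lipschitz continuous on $\mathbb R^d\setminus\Theta$, and let $\mathfrak n\colon\Theta\to\mathbb R^d$ be a normal vector along $\Theta$. Then for every $x\in\Theta$ and every $s\in\{+,-\}$ the limit $\lim_{h\downarrow0}\mu(x+sh\,\mathfrak n(x))$ exists in $\mathbb R^d$.
   Context: $\|\cdot\|$ is the Euclidean norm. A nonempty $\Theta\subset\mathbb R^d$ is a $C^1$-hypersurface if for every $x\in\Theta$ there are open $U,V$ with $x\in U$ and a $C^1$-diffeomorphism $\phi\colon U\to V$ with $\phi(\Theta\cap U)=(\mathbb R^{d-1}\times\{0\})\cap V$ ($\{0\}$ if $d=1$). A normal vector along $\Theta$ is a continuous unit-length $\mathfrak n\colon\Theta\to\mathbb R^d$ orthogonal at each $x$ to every tangent vector $\gamma'(0)$ of a $C^1$-curve $\gamma$ in $\Theta$ with $\gamma(0)=x$; orientable means one exists. $\mathrm{reach}(\Theta)=\sup\{\varepsilon\ge0:$ every $x$ with $\inf_{y\in\Theta}\|x-y\|<\varepsilon$ has a unique nearest point in $\Theta\}$; positive reach means $\mathrm{reach}(\Theta)>0$. Intrinsic Lipschitz continuity on $A$: $\|f(x)-f(y)\|\le L\rho_A(x,y)$ for all $x,y\in A$, where $\rho_A(x,y)$ is the infimum of the lengths $l(\gamma)=\sup\sum_k\|\gamma(t_k)-\gamma(t_{k-1})\|$ of continuous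 curves $\gamma\colon[0,1]\to A$ from $x$ to $y$. *)

(* Defs.v *)
From HB Require Import structures.
From mathcomp Require Import all_boot all_order all_algebra.
From mathcomp Require Import all_classical all_reals all_analysis.
Set Implicit Arguments. Unset Strict Implicit. Unset Printing Implicit Defensive.
Import Order.TTheory GRing.Theory Num.Theory.
Import numFieldNormedType.Exports.
Local Open Scope classical_set_scope.
Local Open Scope ring_scope.

Section Defs.
Variables (R : realType) (d : nat).
Notation V := 'rV[R]_d.

Definition edot (x y : V) : R := \sum_(i < d) x 0 i * y 0 i.
Definition enorm (x : V) : R := Num.sqrt (edot x x).

(* C^1 on an open set U: differentiable at every point of U, and the derivative
   x |-> 'd f x is continuous on U (tested on every direction v, which in finite
   dimension is continuity of the Jacobian). *)
Definition C1_on (U : set V) (f : V -> V) : Prop :=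
  open U /\ (forall x, U x -> differentiable f x) /\
  (forall v : V, {within U, continuous (fun x => 'd f x v)}).

Definition C1_diffeo (U W : set V) (phi : V -> V) : Prop :=
  open U /\ open W /\ C1_on U phi /\
  exists psi : V -> V, C1_on W psi /\
    (forall x, U x -> W (phi x) /\ psi (phi x) = x) /\
    (forall y, W y -> U (psi y) /\ phi (psi y) = y).

(* R^{d-1} x {0}  (= {0} when d = 1) *)
Definition flat_hyperplane : set V := [set y | forall i : 'I_d, i.+1 = d -> y 0 i = 0].

Definition C1_hypersurface (Th : set V) : Prop :=
  Th !=set0 /\
  forall x, Th x -> exists (U W : set V) (phi : V -> V),
    U x /\ C1_diffeo U W phi /\ phi @` (Th `&` U) = flat_hyperplane `&` W.

Definition C1_curve_in (Th : set V) (g : R -> V) : Prop :=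
  exists e : R, 0 < e /\
    (forall t, `|t| < e -> Th (g t)) /\
    (forall t, `|t| < e -> derivable g t 1) /\
    {within [set` `]-e, e[], continuous (derive1 g)}.

Definition normal_vector (Th : set V) (n : V -> V) : Prop :=
  {within Th, continuous n} /\
  (forall x, Th x -> enorm (n x) = 1) /\
  (forall x, Th x -> forall g : R -> V, C1_curve_in Th g -> g 0 = x ->
      edot (n x) (derive1 g 0) = 0).

Definition orientable (Th : set V) : Prop := exists n, normal_vector Th n.

Definition dist_to (Th : set V) (x : V) : R := inf [set enorm (x - y) | y in Th].

Definition unique_nearest (Th : set V) (x : V) : Prop :=
  exists! y, Th y /\ forall z, Th z -> enorm (x - y) <= enorm (x - z).

Definition reach (Th : set V) : \bar R :=
  ereal_sup [set e%:E | e in [set e : R | 0 <= e /\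
      forall x, dist_to Th x < e -> unique_nearest Th x]].

Definition positive_reach (Th : set V) : Prop := (0 < reach Th)%E.

Definition curve_length (g : R -> V) : \bar R :=
  ereal_sup [set l : \bar R | exists (k : nat) (t : nat -> R),
     [/\ t 0%N = 0, t k = 1, (forall i, (i < k)%N -> t i <= t i.+1) &
      l = (\sum_(1 <= i < k.+1) enorm (g (t i) - g (t i.-1)))%:E]].

(* intrinsic distance in A (+oo if no continuous curve in A joins x and y) *)
Definition intrinsic_dist (A : set V) (x y : V) : \bar R :=
  ereal_inf [set curve_length g | g in [set g : R -> V |
     {within [set` `[0, 1]], continuous g} /\ (forall t, 0 <= t <= 1 -> A (g t)) /\
     g 0 = x /\ g 1 = y]].

Definition intrinsic_lipschitz_on (A : set V) (f : V -> V) : Prop :=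
  exists L : R, 0 < L /\ forall x y, A x -> A y ->
    ((enorm (f x - f y))%:E <= L%:E * intrinsic_dist A x y)%E.

End Defs.

(* Main.v *)
Require Import Defs.
From HB Require Import structures.
From mathcomp Require Import all_boot all_order all_algebra.
From mathcomp Require Import all_classical all_reals all_analysis.
From mathcomp Require Import ring lra.
Import Order.TTheory GRing.Theory Num.Theory.
Import numFieldNormedType.Exports.
Local Open Scope classical_set_scope.
Local Open Scope ring_scope.

Section G.
Variable R : realType.

Lemma diff_est (V W : normedModType R) (f : V -> W) x : differentiable f x ->
  forall eps, 0 < eps -> \forall h \near (0:V), `|f (h + x) - f x - 'd f x h| <= eps * `|h|.
Proof.
move=> df eps eps0.
have /eqaddoP := diff_locally df.
move=> /(_ eps eps0); apply: filterS => h /=.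
by rewrite opprD addrA.
Qed.

Lemma diff_lip (V W : normedModType R) (f : V -> W) x : differentiable f x ->
  exists2 C, 0 < C & \forall h \near (0:V), `|f (h + x) - f x| <= C * `|h|.
Proof.
move=> df.
have [k k0 hk] := linear_lipschitz (diff_continuous df).
exists (k + 1); first by rewrite addr_gt0.
near=> h.
have e1 : `|f (h + x) - f x - 'd f x h| <= 1 * `|h|.
  near: h; exact: diff_est.
rewrite mulrDl; apply: (le_trans _ (lerD (hk h) e1)).
by rewrite -[X in `|X| <= _](subrK ('d f x h)) addrC ler_normD.
Unshelve. all: by end_near. Qed.

Lemma near0_R (P : R -> Prop) : (\forall t \near (0:R), P t) ->
  exists2 e, 0 < e & forall t, `|t| < e -> P t.
Proof.
move=> /nbhs_ballP [e e0 he]; exists e => // t ht; apply: he.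
by rewrite -ball_normE /= sub0r normrN.
Qed.

Section T.
Variables (d : nat).
Notation V := 'rV[R]_d.
Local Notation flat := (@flat_hyperplane R d).
Implicit Types (a b z : 'rV[R]_d).

Lemma norm_entry z i : `|z 0 i| <= `|z|.
Proof.
rewrite [X in _ <= X]mx_normrE.
rewrite (bigD1 (0, i)) //=. by rewrite le_max lexx.
Qed.

Lemma edotDr a b c : edot a (b + c) = edot a b + edot a c.
Proof. by rewrite /edot -big_split /=; apply: eq_bigr => i _; rewrite mxE mulrDr. Qed.
Lemma edotZr a k b : edot a (k *: b) = k * edot a b.
Proof. by rewrite /edot mulr_sumr; apply: eq_bigr => i _; rewrite mxE mulrCA. Qed.
Lemma edotNr a b : edot a (- b) = - edot a b.
Proof. by rewrite -scaleN1r edotZr mulN1r. Qed.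
Lemma edotBr a b c : edot a (b - c) = edot a b - edot a c.
Proof. by rewrite edotDr edotNr. Qed.
Lemma edotZl a k b : edot (k *: a) b = k * edot a b.
Proof. by rewrite /edot mulr_sumr; apply: eq_bigr => i _; rewrite mxE mulrA. Qed.
Lemma edotC a b : edot a b = edot b a.
Proof. by rewrite /edot; apply: eq_bigr => i _; rewrite mulrC. Qed.
Lemma edot_ge0 a : 0 <= edot a a.
Proof. by rewrite /edot; apply: sumr_ge0 => i _; rewrite -expr2 sqr_ge0. Qed.

Lemma edot_bound a b : `|edot a b| <= (\sum_i `|a 0 i|) * `|b|.
Proof.
rewrite /edot mulr_suml; apply: (le_trans (ler_norm_sum _ _ _)).
apply: ler_sum => i _; rewrite normrM; apply: ler_wpM2l => //; exact: norm_entry.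
Qed.

Lemma edot1 a : enorm a = 1 -> edot a a = 1.
Proof. by move=> h; rewrite -(sqr_sqrtr (edot_ge0 a)) -/(enorm a) h expr1n. Qed.

Lemma enormZ k a : enorm (k *: a) = `|k| * enorm a.
Proof.
by rewrite /enorm edotZl edotZr mulrA -expr2 sqrtrM ?sqr_ge0 // sqrtr_sqr.
Qed.

Lemma norm_le_enorm z : `|z| <= enorm z.
Proof.
have [->|] := eqVneq `|z| 0; first exact: sqrtr_ge0.
move=> /(@mx_norm_neq0 _ _ _ z) [[i j] /= hz]; rewrite [X in X <= _]hz.
rewrite /enorm -(sqrtr_sqr (z i j)) ler_sqrt ?edot_ge0 // /edot.
rewrite (bigD1 j) //= -expr2 (ord1 i) lerDl; apply: sumr_ge0 => k _; by rewrite -expr2 sqr_ge0.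
Qed.

Lemma seg_dist (A : set 'rV[R]_d) (a b : 'rV[R]_d) :
  (forall t, 0 <= t <= 1 -> A (a + t *: (b - a))) ->
  (intrinsic_dist A a b <= (enorm (b - a))%:E)%E.
Proof.
move=> hA; pose g := fun t : R => a + t *: (b - a).
have gc : continuous g.
  move=> t; apply: cvgD; first exact: cvg_cst.
  exact: cvgZr_tmp.
apply: (le_trans (ereal_inf_lbound _)).
  exists g => //; split; first exact: continuous_subspaceT.
  split; first exact: hA.
  by rewrite /g scale0r addr0 scale1r addrC subrK.
apply: ge_ereal_sup => l [k [t [t0 tk tinc ->]]].
rewrite lee_fin.
have -> : \sum_(1 <= i < k.+1) enorm (g (t i) - g (t i.-1)) =
          \sum_(0 <= i < k) (t i.+1 - t i) * enorm (b - a).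
  rewrite big_add1 /=; apply: eq_big_nat => i /andP[_ ik].
  rewrite /g opprD addrACA subrr add0r -scalerBl enormZ ger0_norm //.
  by rewrite subr_ge0 tinc.
rewrite -big_distrl /= telescope_sumr // tk t0 subr0 mul1r //.
Qed.

Lemma flatD (a b : V) : flat a -> flat b -> flat (a + b).
Proof. by move=> ha hb i hi; rewrite mxE ha // hb // addr0. Qed.
Lemma flatZ k (a : V) : flat a -> flat (k *: a).
Proof. by move=> ha i hi; rewrite mxE ha // mulr0. Qed.
Lemma flatB (a b : V) : flat a -> flat b -> flat (a - b).
Proof. by move=> ha hb; apply: flatD => //; rewrite -scaleN1r; exact: flatZ. Qed.

Lemma affine_cont (w v : V) : continuous (fun t : R => w + t *: v).
Proof. by move=> t; apply: cvgD; [exact: cvg_cst | exact: cvgZr_tmp]. Qed.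

Lemma tangent_orth (Th : set V) (n : V -> V) x (U W : set V) phi psi :
  normal_vector Th n -> Th x -> U x -> open W -> C1_on W psi ->
  (forall y, U y -> W (phi y) /\ psi (phi y) = y) ->
  phi @` (Th `&` U) = flat `&` W ->
  forall v, flat v -> edot (n x) ('d psi (phi x) v) = 0.
Proof.
move=> [_ [_ nv]] Thx Ux oW [_ [dpsi cpsi]] inv himg v fv.
set w0 := phi x.
have [Ww0 psiw0] := inv x Ux.
have fw0 : flat w0.
  have : (phi @` (Th `&` U)) w0 by exists x.
  by rewrite himg => -[].
pose a := fun t : R => w0 + t *: v.
pose g := psi \o a.
have a0 : a 0 = w0 by rewrite /a scale0r addr0.
have nearW : \forall t \near (0:R), W (a t).
  have hc : a @ (0:R) --> a 0 := affine_cont w0 v 0.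
  move: hc; rewrite a0 => /(_ W); apply.
  by apply: open_nbhs_nbhs; split.
have [e e0 he] := near0_R _ nearW.
have isa t : is_diff t a ( *:%R ^~ v).
  have h := is_diffD (is_diff_cst w0 t) (is_diff_scalel t v).
  apply: (is_diff_eq h); by rewrite add0r.
have dg t : W (a t) -> differentiable g t /\ derive1 g t = 'd psi (a t) v.
  move=> Wat.
  have [da ha] := isa t.
  have dp : differentiable psi (a t) by exact: dpsi.
  have dgt : differentiable g t by exact: differentiable_comp.
  split=> //.
  rewrite derive1E' // diff_comp //= ha /= scale1r //.
have C1g : C1_curve_in Th g.
  exists e; split => //; split.
    move=> t /he Wat.
    have : (phi @` (Th `&` U)) (a t).
      rewrite himg; split => //; exact/flatD/flatZ.
    case=> y [Thy Uy] hy; rewrite /g /= -hy (inv y Uy).2 //.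
  split; first by move=> t /he /dg [] /diff_derivable.
  apply: (@subspace_eq_continuous _ _ _ (fun t => 'd psi (a t) v)).
    move=> t; rewrite inE /= in_itv /= => tI.
    have : `|t| < e by rewrite ltr_norml.
    by move=> /he /dg [].
  rewrite continuous_open_subspace; last exact: interval_open.
  move=> t; rewrite inE /= in_itv /= => tI.
  have Wat : W (a t) by apply: he; rewrite ltr_norml.
  apply: (@continuous_comp _ _ _ a (fun y => 'd psi y v)).
    exact: affine_cont.
  have := cpsi v; rewrite continuous_open_subspace // => /(_ (a t)); apply.
  by rewrite inE.
have := nv x Thx g C1g; rewrite /g /= a0 psiw0 => /(_ erefl).
have W0 : W (a 0) by rewrite a0.
by have [_ ->] := dg 0 W0; rewrite a0.
Qed.

Lemma off_surface (Th : set V) (n : V -> V) x : C1_hypersurface Th -> normal_vector Th n -> Th x ->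
  \forall t \near (0:R), t != 0 -> ~ Th (x + t *: n x).
Proof.
move=> [_ hc] nvn Thx.
have [U [W [phi [Ux [[oU [oW [[_ [dphi _]] [psi [C1W [inv1 inv2]]]]]] himg]]]]] := hc x Thx.
have C1W' := C1W; case: C1W' => _ [dpsi _].
set w0 := phi x.
have [Ww0 psiw0] := inv1 x Ux.
have orth := tangent_orth _ _ _ _ _ _ _ nvn Thx Ux oW C1W inv1 himg.
have [C C0 hC] := diff_lip _ _ _ _ (dphi x Ux).
pose K := \sum_i `|n x 0 i| + 1.
have K1 : \sum_i `|n x 0 i| <= K - 1 by rewrite addrK.
have K0 : 0 < K by rewrite ltr_wpDl ?sumr_ge0.
pose eps := (2 * K * C)^-1.
have eps0 : 0 < eps by rewrite invr_gt0 !mulr_gt0.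
have hest := diff_est _ _ _ _ (dpsi w0 Ww0) _ eps0.
have n1 : `|n x| <= 1 by case: nvn => _ [hn _]; rewrite -(hn x Thx) norm_le_enorm.
have hU : \forall t \near (0:R), U (x + t *: n x).
  have hc0 : (fun t : R => x + t *: n x) @ (0:R) --> x + 0 *: n x := affine_cont x (n x) 0.
  move: hc0; rewrite scale0r addr0 => /(_ U); apply.
  by apply: open_nbhs_nbhs; split.
have hC' : \forall t \near (0:R), `|phi (t *: n x + x) - phi x| <= C * `|t *: n x|.
  have hc0 : (fun t : R => t *: n x) @ (0:R) --> 0 *: n x := cvgZr_tmp (@cvg_id _ (nbhs (0:R))).
  move: hc0; rewrite scale0r => /(_ _ _ hC); apply.
have hE : \forall t \near (0:R),
   `|psi ((phi (x + t *: n x) - w0) + w0) - psi w0 - 'd psi w0 (phi (x + t *: n x) - w0)|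
     <= eps * `|phi (x + t *: n x) - w0|.
  have hc0 : (fun t : R => phi (x + t *: n x) - w0) @ (0:R) --> phi (x + 0 *: n x) - w0.
    apply: cvgB; last exact: cvg_cst.
    apply: (@continuous_comp _ _ _ (fun t : R => x + t *: n x) phi).
      exact: affine_cont.
    apply: differentiable_continuous; apply: dphi.
    by rewrite scale0r addr0.
  move: hc0; rewrite scale0r addr0 subrr => /(_ _ hest); apply.
near=> t => tn0 Tht.
have Upt : U (x + t *: n x) by near: t.
have hCt : `|phi (t *: n x + x) - phi x| <= C * `|t *: n x| by near: t.
have hEt : `|psi ((phi (x + t *: n x) - w0) + w0) - psi w0 - 'd psi w0 (phi (x + t *: n x) - w0)|
     <= eps * `|phi (x + t *: n x) - w0| by near: t.
set pt := x + t *: n x.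
have [Wpt psipt] := inv1 pt Upt.
have fpt : (flat `&` W) (phi pt).
  by rewrite -himg; exists pt.
have fw0 : (flat `&` W) w0.
  by rewrite -himg; exists x.
set k := phi pt - w0.
have fk : flat k by apply: flatB; [case: fpt | case: fw0].
have ok := orth k fk.
move: hEt; rewrite subrK psipt psiw0.
have -> : pt - x = t *: n x by rewrite /pt addrC addKr.
move=> hEt.
have key : edot (n x) (t *: n x - 'd psi w0 k) = t.
  rewrite edotBr edotZr ok subr0 edot1 ?mulr1 //.
  by case: nvn => _ [hn _]; apply: hn.
have b1 := edot_bound (n x) (t *: n x - 'd psi w0 k).
rewrite key in b1.
have hCt' : `|k| <= C * `|t|.
  apply: (le_trans _ (ler_wpM2l (ltW C0) (_ : `|t *: n x| <= `|t|))).
    by move: hCt; rewrite [t *: n x + x]addrC.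
  by rewrite normrZ ler_piMr.
have hA : `|t *: n x - 'd psi w0 k| <= eps * `|k| := hEt.
have S0 : 0 <= \sum_i `|n x 0 i| by apply: sumr_ge0.
have h1 : `|t| <= K * (eps * (C * `|t|)).
  apply: (le_trans b1); apply: ler_pM => //.
    lra.
  apply: (le_trans hA); apply: ler_wpM2l => //; exact: ltW.
have h2 : K * (eps * (C * `|t|)) = `|t| / 2.
  rewrite /eps; field.
  by rewrite !gt_eqF.
rewrite h2 in h1.
have : 0 < `|t| by rewrite normr_gt0.
lra.
Unshelve. all: by end_near. Qed.
End T.
End G.

Lemma lip_cvg (R : realType) (d : nat) (f : R -> 'rV[R]_d) (δ L : R) : 0 < δ -> 0 < L ->
  (forall h1 h2, 0 < h1 < δ -> 0 < h2 < δ -> `|f h1 - f h2| <= L * `|h1 - h2|) ->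
  exists l : 'rV[R]_d, f @ (0:R)^'+ --> l.
Proof.
move=> d0 L0 hf.
suff: cvg (f @ (0:R)^'+) by move=> c; exists (lim (f @ (0:R)^'+)).
apply/cauchy_cvgP; apply: cauchy_exP => eps eps0.
pose h0 := Num.min (δ / 2) (eps / (2 * L)).
have h00 : 0 < h0 by rewrite lt_min !divr_gt0 ?mulr_gt0.
have h0d : h0 < δ by rewrite gt_min ltr_pdivrMr // ltr_pMr // ltr1n.
have h0e : h0 <= eps / (2 * L) by rewrite ge_min lexx orbT.
exists (f h0).
suff : \forall h \near (0:R)^'+, ball (f h0) eps (f h) by [].
near=> h.
have hp : 0 < h by near: h; exact: nbhs_right_gt.
have hh0 : h < h0 by near: h; exact: nbhs_right_lt.
rewrite -ball_normE /ball_ /=.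
apply: (le_lt_trans (hf _ _ _ _)); rewrite ?h00 ?hp ?h0d ?(lt_trans hh0 h0d) //.
have : `|h0 - h| < h0 by rewrite ger0_norm ?subr_ge0 ?(ltW hh0) // ltrBlDr ltrDl.
rewrite -(ltr_pM2l L0) => /lt_le_trans; apply.
rewrite -ler_pdivlMl //; apply: (le_trans h0e).
rewrite [leRHS]mulrC ler_pM2l // lef_pV2 ?posrE ?mulr_gt0 // ler_pMl // ler1n.
Unshelve. all: by end_near. Qed.

Theorem lemma2 (R : realType) (d : nat) (Th : set 'rV[R]_d)
    (mu n : 'rV[R]_d -> 'rV[R]_d) :
  C1_hypersurface Th -> orientable Th -> positive_reach Th ->
  intrinsic_lipschitz_on (~` Th) mu ->
  normal_vector Th n ->
  forall x, Th x -> forall s : R, (s = 1 \/ s = -1) ->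
    exists l : 'rV[R]_d, (fun h : R => mu (x + (s * h) *: n x)) @ 0^'+ --> l.
Proof.
move=> hC _ _ [L [L0 hL]] nvn x Thx s hs.
have [e e0 he] := near0_R _ _ (off_surface _ _ _ _ _ hC nvn Thx).
have s1 : `|s| = 1 by case: hs => ->; rewrite ?normrN normr1.
have n1 : enorm (n x) = 1 by case: nvn => _ [hn _]; apply: hn.
have offl u : 0 < u < e -> (~` Th) (x + (s * u) *: n x).
  move=> /andP[u0 ue]; apply: he.
    by rewrite normrM s1 mul1r gtr0_norm.
  by apply: mulf_neq0; [rewrite -normr_gt0 s1 | rewrite gt_eqF].
apply: (lip_cvg _ _ _ e L) => // h1 h2 /andP[h10 h1e] /andP[h20 h2e].
set a := x + (s * h1) *: n x; set b := x + (s * h2) *: n x.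
have Aa : (~` Th) a by apply: offl; rewrite h10 h1e.
have Ab : (~` Th) b by apply: offl; rewrite h20 h2e.
have := hL _ _ Aa Ab.
have hd : (intrinsic_dist (~` Th) a b <= (enorm (b - a))%:E)%E.
  apply: seg_dist => tau /andP[t0 t1].
  have -> : a + tau *: (b - a) = x + (s * (h1 + tau * (h2 - h1))) *: n x.
    rewrite /a /b opprD addrACA subrr add0r -scalerBl scalerA -addrA -scalerDl.
    by congr (_ + _ *: _); ring.
  have mx1 : h1 <= Num.max h1 h2 by rewrite le_max lexx.
  have mx2 : h2 <= Num.max h1 h2 by rewrite le_max lexx orbT.
  have mxe : Num.max h1 h2 < e by rewrite gt_max h1e h2e.
  have mn1 : Num.min h1 h2 <= h1 by rewrite ge_min lexx.
  have mn2 : Num.min h1 h2 <= h2 by rewrite ge_min lexx orbT.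
  have mn0 : 0 < Num.min h1 h2 by rewrite lt_min h10 h20.
  have q1 : 0 <= (1 - tau) * (Num.max h1 h2 - h1) by apply: mulr_ge0; lra.
  have q2 : 0 <= tau * (Num.max h1 h2 - h2) by apply: mulr_ge0; lra.
  have q3 : 0 <= (1 - tau) * (h1 - Num.min h1 h2) by apply: mulr_ge0; lra.
  have q4 : 0 <= tau * (h2 - Num.min h1 h2) by apply: mulr_ge0; lra.
  apply: offl; apply/andP; split; lra.
have E : enorm (b - a) = `|h1 - h2|.
  rewrite /a /b opprD addrACA subrr add0r -scalerBl enormZ n1 mulr1 -mulrBr normrM s1 mul1r.
  by rewrite distrC.
rewrite E in hd.
have L0' : (0 <= L%:E)%E by rewrite lee_fin ltW.
move=> /le_trans /(_ (lee_wpmul2l L0' hd)); rewrite -EFinM lee_fin; apply: le_trans; exact: norm_le_enorm.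
Qed.
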